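(* Let $\mathcal{V}_t$ be a variety of $\Omega$-algebras (of a plural type) satisfying the identity $t(x,y)=x$ for some $t\in T_2$, and let $\Sigma$ be an equational base for $\mathcal{V}_t$. Then the Mal'tsev product $\mathcal{V}_t\circ\mathcal{S}$ is a variety; in fact $\mathcal{V}_t\circ\mathcal{S}=\mathcal{V}_t^{\,p}$, and $\Sigma^p$ is an equational base for $\mathcal{V}_t\circ\mathcal{S}$.
   Context: Standing conventions: $\Omega$-algebras are of a plural similarity type, i.e. there are no nullary operation symbols and at least one operation symbol of arity $\ge 2$. For $n\ge 1$, $T_n$ denotes the set of $\Omega$-terms in the variables $x_1,\dots,x_n$ in which each of these $n$ variables actually occurs. An identity is regular if exactly the same variables occur on both sides. $\mathcal{S}$ denotes the variety of $\Omega$-semilattices: all $\Omega$-algebras of the given type satisfying every regular identity (in such an algebra any term in $T_2$ is a semilattice operation, and every basic $n$-ary operation equals the $n$-fold product in this semilattice). For a class $\mathcal{V}$ of $\Omega$-algebras, the Mal'tsev product $\mathcal{V}\circ\mathcal{S}$ is the class of all $\Omega$-algebras $A$ having a congruence $\theta$ such that $A/\theta\in\mathcal{S}$ and every $\theta$-class (which is a subalgebra, since $\mathcal{S}$ is idempotent) belongs to $\mathcal{V}$; such $A$ is called a semilattice sum of $\mathcal{V}$-algebras. Prolongation: for an identity $\sigma$ of the form $u(y_1,\dots,y_n)=v(y_1,\dots,y_n)$ (where the variables of the terms $u,v$ are among $y_1,\dots,y_n$, not necessarily all occurring) and $m\ge1$, let $\sigma^p_m$ be the set of all identities $u(r_1,\dots,r_n)=v(r_1,\dots,r_n)$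 obtained by substituting $r_i(x_1,\dots,x_m)$ for $y_i$, where $r_1,\dots,r_n$ range over $T_m$. Let $\sigma^p=\bigcup_{m>0}\sigma^p_m$, and for a set $\Sigma$ of identities $\Sigma^p=\bigcup_{\sigma\in\Sigma}\sigma^p$. For a variety $\mathcal{V}$, its prolongation $\mathcal{V}^p$ is the variety defined by $\mathrm{Id}(\mathcal{V})^p$, where $\mathrm{Id}(\mathcal{V})$ is the set of all identities holding in $\mathcal{V}$. *)

(* Defs.v *)
From mathcomp Require Import all_boot.
Set Implicit Arguments. Unset Strict Implicit. Unset Printing Implicit Defensive.

Section UA.
Variables (O : Type) (ar : O -> nat).

Definition plural : Prop := (forall o, 0 < ar o) /\ (exists o, 2 <= ar o).

Inductive term : Type :=
| Var : nat -> term
| App : forall o : O, ('I_(ar o) -> term) -> term.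
Arguments App o _ : clear implicits.

Fixpoint occurs (i : nat) (t : term) : Prop :=
  match t with
  | Var j => i = j
  | App o f => exists k, occurs i (f k)
  end.

Definition in_T (n : nat) (t : term) : Prop :=
  forall i, occurs i t <-> i < n.

Definition identity := (term * term)%type.

Definition regular (s : identity) : Prop :=
  forall i, occurs i s.1 <-> occurs i s.2.

Record algebra := Algebra {
  carrier :> Type;
  op : forall o : O, ('I_(ar o) -> carrier) -> carrier }.
Arguments op a o _ : clear implicits.

Fixpoint eval (A : algebra) (val : nat -> A) (t : term) : A :=
  match t with
  | Var i => val i
  | App o f => op A o (fun k => eval val (f k))
  end.

Definition holds (A : algebra) (s : identity) : Prop :=
  forall val : nat -> A, eval val s.1 = eval val s.2.

Definition Mod (Sigma : identity -> Prop) (A : algebra) : Prop :=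
  forall s, Sigma s -> holds A s.

Definition Id (Sigma : identity -> Prop) (s : identity) : Prop :=
  forall B : algebra, Mod Sigma B -> holds B s.

Definition is_variety (C : algebra -> Prop) : Prop :=
  exists Gamma : identity -> Prop, forall A, C A <-> Mod Gamma A.

Fixpoint subst (r : nat -> term) (t : term) : term :=
  match t with
  | Var i => r i
  | App o f => App o (fun k => subst r (f k))
  end.

Definition prolong (Sigma : identity -> Prop) (s : identity) : Prop :=
  exists u v m (r : nat -> term),
    [/\ Sigma (u, v), 0 < m, (forall i, in_T m (r i)) &
        s = (subst r u, subst r v)].

Definition congruence (A : algebra) (th : A -> A -> Prop) : Prop :=
  [/\ (forall x, th x x), (forall x y, th x y -> th y x),
      (forall x y z, th x y -> th y z -> th x z) &
      (forall o (a b : 'I_(ar o) -> A), (forall k, th (a k) (b k)) ->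
         th (op A o a) (op A o b))].

(* A/th satisfies the identity s (unfolded: evaluations agree modulo th) *)
Definition holds_mod (A : algebra) (th : A -> A -> Prop) (s : identity) : Prop :=
  forall val : nat -> A, th (eval val s.1) (eval val s.2).

(* A/th belongs to the variety S of Omega-semilattices *)
Definition quotient_in_S (A : algebra) (th : A -> A -> Prop) : Prop :=
  forall s, regular s -> holds_mod th s.

Definition class_closed (A : algebra) (th : A -> A -> Prop) (a : A) : Prop :=
  forall o (args : 'I_(ar o) -> A), (forall k, th a (args k)) ->
    th a (op A o args).

Definition class_alg (A : algebra) (th : A -> A -> Prop) (a : A)
  (H : class_closed th a) : algebra :=
  @Algebra {x : A | th a x}
    (fun o args => exist _ (op A o (fun k => sval (args k)))
                          (H o _ (fun k => svalP (args k)))).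

Definition maltsev_S (Sigma : identity -> Prop) (A : algebra) : Prop :=
  exists th : A -> A -> Prop,
    [/\ congruence th, quotient_in_S th &
        forall a : A, exists H : class_closed th a, Mod Sigma (class_alg H)].

End UA.

(* Main.v *)
Require Import Defs.
From mathcomp Require Import all_boot.
From Stdlib Require Import FunctionalExtensionality IndefiniteDescription ProofIrrelevance.
Set Implicit Arguments. Unset Strict Implicit. Unset Printing Implicit Defensive.

Section Basics.
Variables (O : Type) (ar : O -> nat).
Hypothesis Hpos : forall o, 0 < ar o.

Lemma sig_eq (X : Type) (P : X -> Prop) (x y : {z | P z}) : sval x = sval y -> x = y.
Proof. case: x => x px; case: y => y py /= E; subst y; f_equal; apply: proof_irrelevance. Qed.

Lemma eval_subst (A : algebra ar) (val : nat -> A) r (u : term ar) :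
  eval val (subst r u) = eval (fun i => eval val (r i)) u.
Proof.
elim: u => [i|o f IH] //=. congr (op _). apply: functional_extensionality => k. exact: IH.
Qed.

Lemma eval_ext (A : algebra ar) (f g : nat -> A) (u : term ar) :
  (forall i, occurs i u -> f i = g i) -> eval f u = eval g u.
Proof.
elim: u => [i|o h IH] H /=; first by apply: H.
congr (op _); apply: functional_extensionality => k; apply: IH => i Hi; apply: H; by exists k.
Qed.

Lemma occurs_subst j (r : nat -> term ar) u :
  occurs j (subst r u) <-> exists i, occurs i u /\ occurs j (r i).
Proof.
elim: u => [i|o f IH] /=.
  split; [move=> H; by exists i | by case=> i' [-> H]].
split.
  case=> k /IH [i [Hi Hj]]. exists i; split => //; by exists k.
case=> i [[k Hk] Hj]. exists k; apply/IH; by exists i.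
Qed.

Fixpoint vars (u : term ar) : seq nat :=
  match u with
  | Var i => [:: i]
  | App o f => flatten [seq vars (f k) | k <- enum 'I_(ar o)]
  end.

Lemma occurs_vars i (u : term ar) : occurs i u <-> i \in vars u.
Proof.
elim: u => [j|o f IH] /=.
  by rewrite inE; split => [->|/eqP].
split.
  case=> k /IH Hk; apply/flattenP; exists (vars (f k)) => //; apply/mapP; exists k => //; by rewrite mem_enum.
case/flattenP=> s /mapP [k _ ->] /IH; by exists k.
Qed.

Lemma occurs_ex (u : term ar) : exists i, occurs i u.
Proof.
elim: u => [j|o f IH] /=; first by exists j.
have [i Hi] := IH (Ordinal (Hpos o)). by exists i, (Ordinal (Hpos o)).
Qed.

Lemma seq_bound (s : seq nat) : exists M, forall i, i \in s -> i < M.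
Proof.
elim: s => [|a s [M HM]]; first by exists 0.
exists (maxn a.+1 M) => i; rewrite inE => /orP [/eqP ->|/HM H].
  by rewrite leq_max leqnn.
by rewrite leq_max H orbT.
Qed.

Definition subalg (A : algebra ar) (P : A -> Prop)
  (c : forall o (args : 'I_(ar o) -> A), (forall k, P (args k)) -> P (op args)) : algebra ar :=
  @Algebra _ ar {x : A | P x}
    (fun o args => exist _ (op (fun k => sval (args k))) (c o _ (fun k => svalP (args k)))).

Lemma eval_subalg (A : algebra ar) P c (valc : nat -> subalg (A:=A) (P:=P) c) u :
  sval (eval valc u) = eval (fun i => sval (valc i)) u.
Proof.
elim: u => [i|o f IH] //=. congr (op _). apply: functional_extensionality => k. exact: IH.
Qed.

Lemma PG (A : algebra ar) Gam (HA : Mod (prolong Gam) A) u v (Huv : Gam (u,v))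
  (L : seq nat) (HL : uniq L) (L0 : 0 < size L) (r : nat -> term ar)
  (Hr : forall i j, occurs j (r i) <-> j \in L) (val : nat -> A) :
  eval val (subst r u) = eval val (subst r v).
Proof.
pose ren j := Var ar (index j L).
pose val' i := val (nth 0 L i).
pose r' i := subst ren (r i).
have E : forall i, eval val' (r' i) = eval val (r i).
  move=> i; rewrite /r' eval_subst /=; apply: eval_ext => j /Hr Hj.
  by rewrite /val' nth_index.
have H : holds A (subst r' u, subst r' v).
  apply: HA; exists u, v, (size L), r'; split => //.
  move=> i j; rewrite /r' occurs_subst /=; split.
    by case=> j' [/Hr Hj' ->]; rewrite index_mem.
  move=> Hj; exists (nth 0 L j); split; first by apply/Hr; rewrite mem_nth.
  by rewrite index_uniq.
have := H val'; rewrite /= !eval_subst.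
have -> : (fun i => eval val' (r' i)) = (fun i => eval val (r i)).
  by apply: functional_extensionality.
by rewrite -!eval_subst.
Qed.


Section Main.
Variables (Sigma : identity ar -> Prop) (t : term ar) (Ht : in_T 2 t)
  (Hsat : forall A : algebra ar, Mod Sigma A -> holds A (t, Var ar 0)).

Definition tt (X Y : term ar) := subst (fun i => if i == 0 then X else Y) t.
Definition TT (A : algebra ar) (a b : A) := eval (fun i => if i == 0 then a else b) t.

Lemma eval_tt (A : algebra ar) (val : nat -> A) X Y :
  eval val (tt X Y) = TT (eval val X) (eval val Y).
Proof. rewrite /tt eval_subst; apply: eval_ext => i _; by case: (i == 0). Qed.

Lemma occurs_tt j X Y : occurs j (tt X Y) <-> occurs j X \/ occurs j Y.
Proof.
rewrite /tt occurs_subst; split.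
  case=> i [/Ht Hi]; case: (i == 0); by [left|right].
case=> H; [exists 0 | exists 1]; split => //; by apply/Ht.
Qed.

Lemma Sigma_Id s : Sigma s -> Id Sigma s.
Proof. move=> Hs B HB; exact: HB. Qed.

Section Hard.
Variables (A : algebra ar) (HA : Mod (prolong (Id Sigma)) A).

Lemma K (val : nat -> A) r1 r2 (H : forall j, occurs j r1 <-> occurs j r2) :
  TT (eval val r1) (eval val r2) = eval val r1.
Proof.
have [j0 Hj0] := occurs_ex r1.
have := @PG A _ HA t (Var ar 0) Hsat (undup (vars r1)) (undup_uniq _) _
   (fun i => if i == 0 then r1 else r2) _ val.
rewrite /= -eval_tt => <- //.
  have : j0 \in undup (vars r1) by rewrite mem_undup; apply/occurs_vars.
  by case: (undup _).
move=> i j; rewrite mem_undup -occurs_vars; case: (i == 0) => //; by rewrite H.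
Qed.

Definition th (a b : A) := TT a b = a /\ TT b a = b.

Lemma th_refl a : th a a.
Proof. have := @K (fun _ => a) (Var ar 0) (Var ar 0) (fun _ => iff_refl _) => /= H; by split. Qed.

Lemma th_sym a b : th a b -> th b a.
Proof. by case. Qed.

Lemma th_trans a b c : th a b -> th b c -> th a c.
Proof.
move=> [Hab Hba] [Hbc Hcb].
pose val i := if i == 0 then a else if i == 1 then b else c.
pose X := tt (Var ar 0) (tt (Var ar 1) (Var ar 2)).
pose Z := tt (Var ar 2) (tt (Var ar 1) (Var ar 0)).
have EX : eval val X = a by rewrite /X !eval_tt /= Hbc Hab.
have EZ : eval val Z = c by rewrite /Z !eval_tt /= Hba Hcb.
have HXZ : forall j, occurs j X <-> occurs j Z.
  move=> j; rewrite /X /Z !occurs_tt /=; tauto.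
split.
  by rewrite -EX -EZ K.
rewrite -EX -EZ K //; move=> j; by rewrite HXZ.
Qed.

Lemma th_compat o (a b : 'I_(ar o) -> A) : (forall k, th (a k) (b k)) -> th (op a) (op b).
Proof.
move=> Hab.
set n := ar o.
have k0 : 'I_n := Ordinal (Hpos o).
pose val i := if i < n then a (insubd k0 i) else b (insubd k0 (i - n)).
have Va : forall k : 'I_n, val k = a k.
  by move=> k; rewrite /val ltn_ord valKd.
have Vb : forall k : 'I_n, val (n + k) = b k.
  by move=> k; rewrite /val ltnNge leq_addr /= addKn valKd.
pose X := @App _ ar o (fun k => tt (Var ar k) (Var ar (n + k))).
pose Z := @App _ ar o (fun k => tt (Var ar (n + k)) (Var ar k)).
have EX : eval val X = op a.
  rewrite /X /=; congr (op _); apply: functional_extensionality => k.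
  by rewrite eval_tt /= Va Vb; case: (Hab k).
have EZ : eval val Z = op b.
  rewrite /Z /=; congr (op _); apply: functional_extensionality => k.
  by rewrite eval_tt /= Va Vb; case: (Hab k).
have HXZ : forall j, occurs j X <-> occurs j Z.
  move=> j; rewrite /X /Z /=; split; case=> k /occurs_tt H; exists k; apply/occurs_tt; tauto.
split.
  by rewrite -EX -EZ K.
rewrite -EX -EZ K //; move=> j; by rewrite HXZ.
Qed.

Lemma th_cong : congruence th.
Proof. split; [exact: th_refl | exact: th_sym | exact: th_trans | exact: th_compat]. Qed.

Lemma th_S : quotient_in_S th.
Proof.
case=> u v Hr val; rewrite /th /=; split; first by rewrite K.
by rewrite K //; move=> j; rewrite Hr.
Qed.

Lemma th_closed a : class_closed th a.
Proof.
move=> o args Hk.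
have k0 : 'I_(ar o) := Ordinal (Hpos o).
have H1 : th a (op (fun _ : 'I_(ar o) => a)).
  pose X := @App _ ar o (fun _ => Var ar 0).
  have EX : eval (fun _ => a) X = op (fun _ : 'I_(ar o) => a) by [].
  have HX : forall j, occurs j (Var ar 0) <-> occurs j X.
    move=> j /=; split; [move=> ->; by exists k0 | by case].
  split; rewrite -EX.
    by have := @K (fun _ => a) _ _ HX.
  have := @K (fun _ => a) X (Var ar 0); apply => j; by rewrite HX.
apply: th_trans H1 _; exact: th_compat.
Qed.

Fixpoint PP (k : nat) : term ar :=
  match k with 0 => Var ar 0 | k'.+1 => tt (PP k') (Var ar k'.+1) end.

Lemma occurs_PP j k : occurs j (PP k) <-> j <= k.
Proof.
elim: k => [|k IH] /=; first by split; [move=> -> | rewrite leqn0 => /eqP].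
rewrite occurs_tt IH /=; split.
  by case=> [H|->]; [apply: leqW|].
rewrite leq_eqVlt ltnS => /orP [/eqP ->|H]; by [right|left].
Qed.

Lemma th_class a (H : class_closed th a) : Mod Sigma (class_alg H).
Proof.
case=> u v Hs valc /=.
apply: sig_eq.
have Eu := @eval_subalg A (th a) H valc u.
have Ev := @eval_subalg A (th a) H valc v.
rewrite Eu Ev; clear Eu Ev.
pose w i := sval (valc i).
have Hw : forall i, th a (w i) by move=> i; exact: (svalP (valc i)).
have [M HM] := seq_bound (vars u ++ vars v).
pose val i := if i == 0 then a else w i.-1.
have EP : forall k, eval val (PP k) = a.
  elim=> [|k IH] //=; rewrite eval_tt IH /=; by case: (Hw k).
pose r i := if i < M then tt (Var ar i.+1) (PP M) else PP M.
have Er : forall i, i < M -> eval val (r i) = w i.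
  move=> i Hi; rewrite /r Hi eval_tt EP /=; by case: (Hw i).
have := @PG A _ HA u v (Sigma_Id Hs) (iota 0 M.+1) (iota_uniq _ _) _ r _ val.
rewrite !eval_subst.
rewrite (@eval_ext _ _ w u); last first.
  by move=> i /occurs_vars Hi; apply: Er; apply: HM; rewrite mem_cat Hi.
rewrite (@eval_ext _ _ w v); last first.
  by move=> i /occurs_vars Hi; apply: Er; apply: HM; rewrite mem_cat Hi orbT.
  apply.
  by rewrite size_iota.
move=> i j; rewrite mem_iota /= add0n ltnS /r; case: ifP => Hi.
  rewrite occurs_tt occurs_PP /=; split; [case=> [->|] // | by right].
by rewrite occurs_PP.
Qed.

Lemma hard : maltsev_S Sigma A.
Proof.
exists th; split; [exact: th_cong | exact: th_S |].
move=> a; exists (@th_closed a); exact: th_class.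
Qed.

End Hard.

Lemma prolong_mono (A : algebra ar) : Mod (prolong (Id Sigma)) A -> Mod (prolong Sigma) A.
Proof.
move=> H s [u [v [m [r [Hs Hm Hr E]]]]]; apply: H; exists u, v, m, r; split => //.
exact: Sigma_Id.
Qed.

Lemma up (A : algebra ar) : Mod (prolong Sigma) A -> Mod (prolong (Id Sigma)) A.
Proof.
move=> HA s [u [v [m [r [Hs Hm Hr ->]]]]] val /=.
pose P x := exists r', in_T m r' /\ eval val r' = x.
have c : forall o (args : 'I_(ar o) -> A), (forall k, P (args k)) -> P (op args).
  move=> o args Hk.
  pose rk k := proj1_sig (constructive_indefinite_description _ (Hk k)).
  have Hrk : forall k, in_T m (rk k) /\ eval val (rk k) = args k.
    move=> k; exact: (proj2_sig (constructive_indefinite_description _ (Hk k))).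
  exists (@App _ ar o rk); split.
    move=> j /=; split.
      by case=> k /((Hrk k).1 j).
    move=> Hj; exists (Ordinal (Hpos o)); exact/((Hrk _).1 j).
  rewrite /=; congr (op _); apply: functional_extensionality => k; exact: (Hrk k).2.
have HB : Mod Sigma (subalg c).
  case=> u' v' Hs' valB; apply: sig_eq; rewrite !eval_subalg.
  pose rr i := proj1_sig (constructive_indefinite_description _ (svalP (valB i))).
  have Hrr : forall i, in_T m (rr i) /\ eval val (rr i) = sval (valB i).
    move=> i; exact: (proj2_sig (constructive_indefinite_description _ (svalP (valB i)))).
  have -> : (fun i => sval (valB i)) = (fun i => eval val (rr i)).
    by apply: functional_extensionality => i; rewrite (Hrr i).2.
  rewrite -!eval_subst.
  have := HA (subst rr u', subst rr v'); apply => //.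
  by exists u', v', m, rr; split => // i; exact: (Hrr i).1.
pose valB i : subalg c := exist _ (eval val (r i)) (ex_intro _ (r i) (conj (Hr i) erefl)).
have := Hs _ HB valB; move/(f_equal sval); rewrite !eval_subalg /= !eval_subst.
by [].
Qed.

Lemma easy (A : algebra ar) : maltsev_S Sigma A -> Mod (prolong (Id Sigma)) A.
Proof.
case=> th0 [Hc HS Hcl] s [u [v [m [r [Hs Hm Hr ->]]]]] val /=.
pose a := eval val (r 0).
have Hth : forall i, th0 a (eval val (r i)).
  move=> i; have := HS (r 0, r i) _ val; apply => j /=.
  by rewrite (Hr 0 j) (Hr i j).
have [H HM] := Hcl a.
pose valc i : class_alg H := exist _ (eval val (r i)) (Hth i).
have := Hs _ HM valc; move/(f_equal sval).
rewrite (@eval_subalg A (th0 a) H valc u) (@eval_subalg A (th0 a) H valc v) /=.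
by rewrite !eval_subst.
Qed.

End Main.
End Basics.

Theorem theorem5p4 (O : Type) (ar : O -> nat) (Hpl : plural ar)
  (Sigma : identity ar -> Prop) (t : term ar) (Ht : in_T 2 t)
  (Hsat : forall A : algebra ar, Mod Sigma A -> holds A (t, Var ar 0)) :
  is_variety (maltsev_S Sigma) /\
  (forall A : algebra ar, maltsev_S Sigma A <-> Mod (prolong (Id Sigma)) A) /\
  (forall A : algebra ar, maltsev_S Sigma A <-> Mod (prolong Sigma) A).
Proof.
have Hpos := Hpl.1.
have H3 : forall A : algebra ar, maltsev_S Sigma A <-> Mod (prolong Sigma) A.
  move=> A; split.
    by move=> H; apply: prolong_mono; apply: easy.
  by move=> H; apply: (hard Hpos Ht Hsat); apply: up.
split; first by exists (prolong Sigma).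
split => // A; split; first exact: easy.
exact: (hard Hpos Ht Hsat).
Qed.
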